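(* Let $(M,\diamond,\bullet,\alpha_M)$ be a module over the multiplicative Hom-post-Lie algebra $(L,[\cdot,\cdot],\cdot,\alpha)$ and let $n$ be a non-negative integer. Define $\diamond^{n,0},\bullet^{n,0}:L\otimes M\to M$ by $x\diamond^{n,0}m=\alpha^n(x)\diamond m$ and $x\bullet^{n,0}m=\alpha^n(x)\bullet m$. Then $(M,\diamond^{n,0},\bullet^{n,0},\alpha_M)$ is a module over $L$.
   Context: All vector spaces are over a field $\mathbb{K}$ of characteristic $\neq 2$. A Hom-Lie algebra is $(L,[\cdot,\cdot],\alpha)$ with $[\cdot,\cdot]$ bilinear skew-symmetric, $\alpha$ linear, and $[\alpha(x),[y,z]]+[\alpha(y),[z,x]]+[\alpha(z),[x,y]]=0$. A Hom-post-Lie algebra $(L,[\cdot,\cdot],\cdot,\alpha)$ is a Hom-Lie algebra with bilinear $\cdot$ such that $\alpha(z)\cdot[x,y]-[z\cdot x,\alpha(y)]-[\alpha(x),z\cdot y]=0$ and $\alpha(z)\cdot(y\cdot x)-\alpha(y)\cdot(z\cdot x)+(y\cdot z)\cdot\alpha(x)-(z\cdot y)\cdot\alpha(x)+[y,z]\cdot\alpha(x)=0$ for all $x,y,z$; it is multiplicative if $\alpha([x,y])=[\alpha(x),\alpha(y)]$ and $\alpha(x\cdot y)=\alpha(x)\cdot\alpha(y)$. A module over $L$ is a vector space $M$ with linear $\alpha_M$ and bilinear $\diamond,\bullet:L\otimes M\to M$ such that for all $x,y\in L,m\in M$: (i) $\alpha_M(x\diamond m)=\alpha(x)\diamond\alpha_M(m)$,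 $\alpha_M(x\bullet m)=\alpha(x)\bullet\alpha_M(m)$; (ii) $[x,y]\diamond\alpha_M(m)=\alpha(x)\diamond(y\diamond m)-\alpha(y)\diamond(x\diamond m)$; (iii) $(x\cdot y)\diamond\alpha_M(m)=\alpha(x)\bullet(y\diamond m)-\alpha(y)\diamond(x\bullet m)$; (iv) $[x,y]\bullet\alpha_M(m)=\alpha(x)\bullet(y\bullet m)-\alpha(y)\bullet(x\bullet m)-(x\cdot y)\bullet\alpha_M(m)+(y\cdot x)\bullet\alpha_M(m)$. *)

(* Defs.v *)
From mathcomp Require Import all_boot all_algebra.
Set Implicit Arguments. Unset Strict Implicit. Unset Printing Implicit Defensive.
Import GRing.Theory.
Local Open Scope ring_scope.

Section Defs.
Variable K : fieldType.

Definition lin_map (U V : lmodType K) (f : U -> V) : Prop :=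
  forall (a : K) (x y : U), f (a *: x + y) = a *: f x + f y.

Definition bilin_map (U V W : lmodType K) (f : U -> V -> W) : Prop :=
  (forall (a : K) (x y : U) (z : V), f (a *: x + y) z = a *: f x z + f y z) /\
  (forall (a : K) (x : U) (y z : V), f x (a *: y + z) = a *: f x y + f x z).

Variable L : lmodType K.

Definition HomLie (br : L -> L -> L) (alpha : L -> L) : Prop :=
  [/\ bilin_map br,
      (forall x y, br x y = - br y x),
      lin_map alpha &
      (forall x y z,
         br (alpha x) (br y z) + br (alpha y) (br z x) + br (alpha z) (br x y) = 0)].

Definition HomPostLie (br dot : L -> L -> L) (alpha : L -> L) : Prop :=
  [/\ HomLie br alpha,
      bilin_map dot,
      (forall x y z,
         dot (alpha z) (br x y) - br (dot z x) (alpha y) - br (alpha x) (dot z y) = 0) &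
      (forall x y z,
         dot (alpha z) (dot y x) - dot (alpha y) (dot z x)
         + dot (dot y z) (alpha x) - dot (dot z y) (alpha x)
         + dot (br y z) (alpha x) = 0)].

Definition HomPostLie_multiplicative (br dot : L -> L -> L) (alpha : L -> L) : Prop :=
  (forall x y, alpha (br x y) = br (alpha x) (alpha y)) /\
  (forall x y, alpha (dot x y) = dot (alpha x) (alpha y)).

Definition HomPostLieModule (br dot : L -> L -> L) (alpha : L -> L)
  (M : lmodType K) (alphaM : M -> M) (dia bul : L -> M -> M) : Prop :=
  lin_map alphaM /\ bilin_map dia /\ bilin_map bul /\
  ((forall x m, alphaM (dia x m) = dia (alpha x) (alphaM m)) /\
   (forall x m, alphaM (bul x m) = bul (alpha x) (alphaM m))) /\
  (forall x y m,
     dia (br x y) (alphaM m) = dia (alpha x) (dia y m) - dia (alpha y) (dia x m)) /\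
  (forall x y m,
     dia (dot x y) (alphaM m) = bul (alpha x) (dia y m) - dia (alpha y) (bul x m)) /\
      (forall x y m,
         bul (br x y) (alphaM m) = bul (alpha x) (bul y m) - bul (alpha y) (bul x m)
                                   - bul (dot x y) (alphaM m) + bul (dot y x) (alphaM m)).
End Defs.

(* Main.v *)
Require Import Defs.
From mathcomp Require Import all_boot all_algebra.
Import GRing.Theory.
Local Open Scope ring_scope.

Theorem mainTheorem5 (K : fieldType) (hchar : (2%:R : K) != 0)
  (L : lmodType K) (br dot : L -> L -> L) (alpha : L -> L)
  (M : lmodType K) (alphaM : M -> M) (dia bul : L -> M -> M) (n : nat) :
  HomPostLie br dot alpha ->
  HomPostLie_multiplicative br dot alpha ->
  HomPostLieModule br dot alpha alphaM dia bul ->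
  HomPostLieModule br dot alpha alphaM
    (fun x m => dia (iter n alpha x) m) (fun x m => bul (iter n alpha x) m).
Proof.
move=> [[_ _ alin _] _ _ _] [mbr mdot]
  [Mlin [[d1 d2] [[b1 b2] [[i1 i2] [ii [iii iv]]]]]].
have ilin : forall a x y, iter n alpha (a *: x + y) = a *: iter n alpha x + iter n alpha y.
  by elim: (n) => [|k IH] a x y //=; rewrite IH alin.
have ibr : forall x y, iter n alpha (br x y) = br (iter n alpha x) (iter n alpha y).
  by elim: (n) => [|k IH] x y //=; rewrite IH mbr.
have idot : forall x y, iter n alpha (dot x y) = dot (iter n alpha x) (iter n alpha y).
  by elim: (n) => [|k IH] x y //=; rewrite IH mdot.
have icom : forall x, iter n alpha (alpha x) = alpha (iter n alpha x).
  by move=> x; rewrite -iterS iterSr.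
split; first exact: Mlin.
split; first by split=> *; rewrite ?ilin ?d1 ?d2.
split; first by split=> *; rewrite ?ilin ?b1 ?b2.
split; first by split=> *; rewrite ?i1 ?i2 icom.
split; first by move=> x y m; rewrite ibr ii !icom.
split; first by move=> x y m; rewrite idot iii !icom.
by move=> x y m; rewrite ibr !idot iv !icom.
Qed.
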